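(* Let $\mathcal{K}\subseteq\mathcal{E}$ be a full-dimensional pointed closed convex cone in a finite-dimensional Euclidean space $\mathcal{E}$. If $\mathcal{F}$ is an amenable face of $\mathcal{K}$ of codimension $1$ (i.e. $\dim\mathcal{F}=\dim\mathcal{K}-1$), then $\mathcal{F}$ is projectionally exposed.
   Context: A face of a closed convex cone $\mathcal{K}$ is a closed convex subset $\mathcal{F}\subseteq\mathcal{K}$ such that whenever $x,y\in\mathcal{K}$ and $\alpha x+(1-\alpha)y\in\mathcal{F}$ for some $\alpha\in(0,1)$, then $x,y\in\mathcal{F}$. A face $\mathcal{F}$ is amenable if for every bounded set $B$ there exists $\kappa>0$ with $\operatorname{dist}(x,\mathcal{F})\le\kappa\operatorname{dist}(x,\mathcal{K})$ for all $x\in(\operatorname{span}\mathcal{F})\cap B$ (equivalently, for cones, a single $\kappa$ works for all $x\in\operatorname{span}\mathcal{F}$). A face $\mathcal{F}$ is projectionally exposed if there is an idempotent linear map $P:\mathcal{E}\to\mathcal{E}$ (not necessarily orthogonal) with $P(\mathcal{K})=\mathcal{F}$. Pointed means $\mathcal{K}\cap(-\mathcal{K})=\{0\}$; full-dimensional means $\dim\mathcal{K}=\dim\mathcal{E}$. *)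

(* Defs.v *)
From HB Require Import structures.
From mathcomp Require Import all_boot all_order all_algebra.
From mathcomp Require Import all_classical all_reals all_analysis.
Set Implicit Arguments. Unset Strict Implicit. Unset Printing Implicit Defensive.
Import Order.TTheory GRing.Theory Num.Theory.
Import numFieldNormedType.Exports.
Local Open Scope classical_set_scope.
Local Open Scope ring_scope.

(* The Euclidean space E is modelled as R^n = 'rV[R]_n with the standard
   inner product. *)

Definition enorm (R : realType) (n : nat) (x : 'rV[R]_n) : R :=
  Num.sqrt (\sum_(i < n) x ord0 i ^+ 2).

Definition edist (R : realType) (n : nat) (x : 'rV[R]_n) (S : set 'rV[R]_n) : R :=
  inf [set enorm (x - y) | y in S].

Definition lin_span (R : realType) (n : nat) (S : set 'rV[R]_n) : set 'rV[R]_n :=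
  [set x | exists (k : nat) (c : 'I_k -> R) (v : 'I_k -> 'rV[R]_n),
      (forall i, S (v i)) /\ x = \sum_(i < k) c i *: v i].

Definition has_dim (R : realType) (n : nat) (S : set 'rV[R]_n) (d : nat) : Prop :=
  exists A : 'M[R]_(d, n), row_free A /\
    forall x : 'rV[R]_n, lin_span S x <-> (x <= A)%MS.

Definition convex_cone (R : realType) (n : nat) (K : set 'rV[R]_n) : Prop :=
  K 0 /\ forall x y (a b : R), K x -> K y -> 0 <= a -> 0 <= b -> K (a *: x + b *: y).

Definition closed_convex_cone (R : realType) (n : nat) (K : set 'rV[R]_n) : Prop :=
  closed K /\ convex_cone K.

Definition pointed (R : realType) (n : nat) (K : set 'rV[R]_n) : Prop :=
  forall x, K x -> K (- x) -> x = 0.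

Definition full_dimensional (R : realType) (n : nat) (K : set 'rV[R]_n) : Prop :=
  has_dim K n.

Definition is_convex_set (R : realType) (n : nat) (S : set 'rV[R]_n) : Prop :=
  forall x y (a : R), S x -> S y -> 0 <= a <= 1 -> S (a *: x + (1 - a) *: y).

Definition is_face (R : realType) (n : nat) (K F : set 'rV[R]_n) : Prop :=
  F !=set0 /\ F `<=` K /\ closed F /\ is_convex_set F /\
  forall x y (a : R), K x -> K y -> 0 < a < 1 -> F (a *: x + (1 - a) *: y) ->
    F x /\ F y.

Definition ebounded (R : realType) (n : nat) (B : set 'rV[R]_n) : Prop :=
  exists M : R, forall x, B x -> enorm x <= M.

Definition amenable_face (R : realType) (n : nat) (K F : set 'rV[R]_n) : Prop :=
  is_face K F /\
  forall B : set 'rV[R]_n, ebounded B ->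
    exists kappa : R, 0 < kappa /\
      forall x, lin_span F x -> B x -> edist x F <= kappa * edist x K.

Definition proj_exposed (R : realType) (n : nat) (K F : set 'rV[R]_n) : Prop :=
  is_face K F /\
  exists P : 'M[R]_n, P *m P = P /\ [set x *m P | x in K] = F.

(* Main.v *)
Require Import Defs.
From mathcomp Require Import all_boot all_order all_algebra.
From mathcomp Require Import all_classical all_reals all_analysis.
From mathcomp Require Import ring lra.
Import Order.TTheory GRing.Theory Num.Theory.
Import numFieldNormedType.Exports.
Local Open Scope classical_set_scope.
Local Open Scope ring_scope.
Set Implicit Arguments. Unset Strict Implicit. Unset Printing Implicit Defensive.

Lemma half_in (R : realType) : 0 < (2^-1 : R) < 1.
Proof. apply/andP; split; [rewrite invr_gt0 | rewrite invf_lt1]; lra. Qed.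
Lemma half_le (R : realType) : 0 <= (2^-1 : R) <= 1.
Proof. by case/andP: (half_in R) => /ltW -> /ltW ->. Qed.

Section Helpers.
Variable R : realType.

Definition dot n (x y : 'rV[R]_n) : R := (x *m y^T) 0 0.

Lemma dotE n (x y : 'rV[R]_n) : dot x y = \sum_j x 0 j * y 0 j.
Proof. by rewrite /dot !mxE; apply: eq_bigr => j _; rewrite mxE. Qed.

Lemma dotDl n (x y a : 'rV[R]_n) : dot (x + y) a = dot x a + dot y a.
Proof. by rewrite /dot mulmxDl mxE. Qed.

Lemma dotZl n c (x a : 'rV[R]_n) : dot (c *: x) a = c * dot x a.
Proof. by rewrite /dot -scalemxAl mxE. Qed.

Lemma dotNl n (x a : 'rV[R]_n) : dot (- x) a = - dot x a.
Proof. by rewrite -scaleN1r dotZl mulN1r. Qed.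

Lemma dotBl n (x y a : 'rV[R]_n) : dot (x - y) a = dot x a - dot y a.
Proof. by rewrite dotDl dotNl. Qed.

Lemma dotNr n (x a : 'rV[R]_n) : dot x (- a) = - dot x a.
Proof. by rewrite !dotE -sumrN; apply: eq_bigr => j _; rewrite mxE mulrN. Qed.

Lemma enorm_ge0 n (x : 'rV[R]_n) : 0 <= enorm x.
Proof. exact: sqrtr_ge0. Qed.

Lemma enorm_coord n (x : 'rV[R]_n) i : `|x 0 i| <= enorm x.
Proof.
rewrite /enorm -sqrtr_sqr ler_sqrt; last by apply: sumr_ge0 => j _; exact: sqr_ge0.
rewrite (bigD1 i) //= lerDl; apply: sumr_ge0 => j _; exact: sqr_ge0.
Qed.

Lemma enormZ n c (x : 'rV[R]_n) : enorm (c *: x) = `|c| * enorm x.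
Proof.
rewrite /enorm -sqrtr_sqr -sqrtrM ?sqr_ge0 //; congr Num.sqrt.
rewrite mulr_sumr; apply: eq_bigr => j _; rewrite mxE; ring.
Qed.

Lemma enormN n (x : 'rV[R]_n) : enorm (- x) = enorm x.
Proof. by rewrite -scaleN1r enormZ normrN1 mul1r. Qed.


Section Cone.
Variables (n : nat) (K F : set 'rV[R]_n).
Hypothesis cK : convex_cone K.
Hypothesis fF : is_face K F.

Lemma K_scale c x : 0 <= c -> K x -> K (c *: x).
Proof.
move=> c0 Kx; have := cK.2 x x c 0 Kx Kx c0 (lexx 0).
by rewrite scale0r addr0.
Qed.

Lemma F_sub x : F x -> K x.
Proof. by move=> Fx; case: fF => _ [+ _]; apply. Qed.

Lemma F0 : F 0.
Proof.
case: fF => [[f0 Ff0] [FK [_ [_ face]]]].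
have K0 : K 0 by case: cK.
have K2 : K (2 *: f0) by apply: K_scale => //; exact: FK.
have h : (2^-1 : R) *: (2 *: f0) + (1 - 2^-1) *: 0 = f0.
  by rewrite scalerA mulVf ?pnatr_eq0 // scale1r scaler0 addr0.
have ha := half_in R.
by have := face _ _ _ K2 K0 ha; rewrite h => /(_ Ff0) [].
Qed.

Lemma F_scale c x : 0 <= c -> F x -> F (c *: x).
Proof.
move=> c0 Fx; case: fF => [_ [FK [_ [cvx face]]]].
have [c1|c1] := lerP c 1.
  have := cvx x 0 c Fx F0; rewrite scaler0 addr0; apply.
  by rewrite c0 c1.
have Kc : K (c *: x) by apply: K_scale => //; exact: FK.
have K0 : K 0 by case: cK.
have ha : 0 < c^-1 < 1.
  apply/andP; split; [rewrite invr_gt0 | rewrite invf_lt1]; lra.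
case: (face _ _ _ Kc K0 ha) => //.
rewrite scaler0 addr0 scalerA mulVf ?scale1r //; lra.
Qed.

Lemma F_add x y : F x -> F y -> F (x + y).
Proof.
move=> Fx Fy; case: fF => [_ [FK [_ [cvx face]]]].
have h : (2 : R) *: ((2^-1 : R) *: x + (1 - 2^-1) *: y) = x + y.
  apply/rowP => j; rewrite !mxE; field; rewrite ?pnatr_eq0 //.
rewrite -h; apply: F_scale => //; apply: cvx => //; exact: half_le.
Qed.

Lemma F_sum (I : finType) (c : I -> R) (v : I -> 'rV_n) :
  (forall i, 0 <= c i) -> (forall i, F (v i)) -> F (\sum_i c i *: v i).
Proof.
move=> c0 Fv; apply: (big_ind F); [exact: F0 | exact: F_add |].
by move=> i _; apply: F_scale.
Qed.

Lemma span_decomp x : lin_span F x -> exists p q, F p /\ F q /\ x = p - q.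
Proof.
case=> k [c [v [Fv ->]]].
exists (\sum_i ((`|c i| + c i) / 2) *: v i), (\sum_i ((`|c i| - c i) / 2) *: v i).
split; [apply: F_sum => // i|split; [apply: F_sum => // i|]].
- have := ler_norm (c i); have := ler_norm (- c i); rewrite normrN; lra.
- have := ler_norm (c i); have := ler_norm (- c i); rewrite normrN; lra.
rewrite -sumrB; apply: eq_bigr => i _; rewrite -scalerBl; congr (_ *: _); field; rewrite ?pnatr_eq0 //.
Qed.

Lemma F_span x : F x -> lin_span F x.
Proof.
move=> Fx; exists 1%N, (fun=> 1), (fun=> x); split => //.
by rewrite big_ord1 scale1r.
Qed.

Lemma KH_F x : K x -> lin_span F x -> F x.
Proof.
move=> Kx /span_decomp [p [q [Fp [Fq ex]]]]; subst x.
case: fF => [_ [FK [_ [cvx face]]]].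
have K2 : K (2 *: q) by apply: K_scale => //; exact: FK.
have ha := half_in R.
have hf := face _ _ _ Kx K2 ha.
have e : (2^-1 : R) *: (p - q) + (1 - 2^-1) *: (2 *: q) = 2^-1 *: p + (1 - 2^-1) *: q.
  apply/rowP => j; rewrite !mxE; field; rewrite ?pnatr_eq0 //.
rewrite e in hf; apply: (proj1 (hf _)).
apply: cvx => //; exact: half_le.
Qed.


Lemma relint k (A : 'M[R]_(k, n)) : (forall x, lin_span F x <-> (x <= A)%MS) ->
  exists g r, F g /\ 0 < r /\
    forall b, (b <= A)%MS -> enorm b <= r -> F (g + b).
Proof.
move=> hA.
have hrow : forall i, exists pq : 'rV_n * 'rV_n,
    F pq.1 /\ F pq.2 /\ row i A = pq.1 - pq.2.
  move=> i; have /hA/span_decomp [p [q [Fp [Fq e]]]] := row_sub i A.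
  by exists (p, q).
have [pq hpq] := choice hrow.
set P := pinvmx A.
set S := \sum_i \sum_j `|P j i| + 1.
have S0 : 0 < S.
  have : 0 <= \sum_i \sum_j `|P j i| by apply: sumr_ge0 => i _; apply: sumr_ge0.
  rewrite /S; lra.
exists (\sum_i ((pq i).1 + (pq i).2)), S^-1; split.
  apply: (big_ind F); [exact: F0 | exact: F_add |].
  by move=> i _; case: (hpq i) => [h1 [h2 _]]; apply: F_add.
split; first by rewrite invr_gt0.
move=> b bA nb.
set beta := b *m P.
have hb : b = \sum_i beta 0 i *: ((pq i).1 - (pq i).2).
  rewrite -{1}(mulmxKpV bA) mulmx_sum_row; apply: eq_bigr => i _.
  by case: (hpq i) => [_ [_ ->]].
have hbeta : forall i, `|beta 0 i| <= 1.
  move=> i; rewrite /beta mxE.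
  apply: le_trans (ler_norm_sum _ _ _) _.
  apply: (@le_trans _ _ (enorm b * \sum_j `|P j i|)).
    rewrite mulr_sumr; apply: ler_sum => j _; rewrite normrM.
    by apply: ler_wpM2r => //; exact: enorm_coord.
  have hT : \sum_j `|P j i| <= S.
    rewrite /S (bigD1 i) //= -addrA lerDl.
    apply: addr_ge0 => //; apply: sumr_ge0 => i' _; apply: sumr_ge0 => ? _; exact: normr_ge0.
  apply: (@le_trans _ _ (S^-1 * S)); last by rewrite mulVf ?gt_eqF.
  apply: ler_pM => //; [exact: enorm_ge0 | by apply: sumr_ge0 => ? _; exact: normr_ge0].
have -> : \sum_i ((pq i).1 + (pq i).2) + b =
    \sum_i ((1 + beta 0 i) *: (pq i).1 + (1 - beta 0 i) *: (pq i).2).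
  rewrite hb -big_split /=; apply: eq_bigr => i _.
  by apply/rowP => j; rewrite !mxE; ring.
apply: (big_ind F); [exact: F0 | exact: F_add |].
move=> i _; case: (hpq i) => [h1 [h2 _]].
move: (hbeta i); rewrite ler_norml => /andP [l1 l2].
apply: F_add; apply: F_scale => //; lra.
Qed.

Variable a : 'rV[R]_n.
Hypothesis hH : forall x, lin_span F x <-> dot x a = 0.

Lemma sign_one x y : K x -> K y -> 0 < dot x a -> dot y a < 0 -> False.
Proof.
move=> Kx Ky px ny.
set u := dot x a in px *; set v := dot y a in ny *.
set s := - v / (u - v).
have s0 : 0 < s by rewrite /s divr_gt0 //; lra.
have s1 : s < 1 by rewrite /s ltr_pdivrMr; lra.
have Kz : K (s *: x + (1 - s) *: y) by apply: cK.2 => //; lra.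
have Hz : dot (s *: x + (1 - s) *: y) a = 0.
  rewrite dotDl !dotZl -/u -/v /s; field.
  by apply: lt0r_neq0; lra.
have Fz := KH_F Kz ((hH _).2 Hz).
have [Fx _] := fF.2.2.2.2 _ _ _ Kx Ky (introT andP (conj s0 s1)) Fz.
have := (hH x).1 (F_span Fx); rewrite -/u; lra.
Qed.


Hypothesis amen : amenable_face K F.
Hypothesis pos : forall x, K x -> 0 <= dot x a.
Hypothesis a0 : a != 0.
Hypothesis hrel : exists g r, F g /\ 0 < r /\
    forall b, dot b a = 0 -> enorm b <= r -> F (g + b).

Lemma core : exists d, dot d a = 1 /\ forall x, K x -> F (x - dot x a *: d).
Proof.
case: (pselect (exists e, K e /\ dot e a != 0)) => [[e0 [Ke0 ne0]]|hne]; last first.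
  have aa : dot a a != 0.
    apply/negP => /eqP h; move/negP: a0; apply; apply/eqP/rowP => j.
    rewrite dotE in h; have := psumr_eq0P (fun j _ => sqr_ge0 (a 0 j)) h (i:=j) isT.
    by rewrite mxE => /eqP; rewrite mulf_eq0 orbb => /eqP.
  exists ((dot a a)^-1 *: a); split; first by rewrite dotZl mulVf.
  move=> x Kx; case: (eqVneq (dot x a) 0) => [x0|xn]; last first.
    by exfalso; apply: hne; exists x.
  rewrite x0 scale0r subr0; apply: KH_F => //; exact/hH.
have pe : 0 < dot e0 a by rewrite lt_def ne0 pos.
set e := (dot e0 a)^-1 *: e0.
have Ke : K e by apply: K_scale => //; rewrite invr_ge0 ltW.
have de : dot e a = 1 by rewrite dotZl mulVf.
clearbody e.
have [g [r [Fg [r0 hg]]]] := hrel.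
have ga : dot g a = 0 := (hH g).1 (F_span Fg).
set Sa := \sum_j `|a 0 j|.
set Bnd := Num.sqrt (\sum_i (1 + Sa * `|e 0 i|) ^+ 2).
set B := [set w | exists x, K x /\ enorm x <= 1 /\ w = x - dot x a *: e].
have bB : ebounded B.
  exists Bnd => w [x [Kx [nx ->]]].
  rewrite /enorm ler_sqrt; last by apply: sumr_ge0 => i _; exact: sqr_ge0.
  apply: ler_sum => i _.
  have hx : `|x 0 i| <= 1 := le_trans (enorm_coord x i) nx.
  have ht : `|dot x a| <= Sa.
    rewrite dotE; apply: le_trans (ler_norm_sum _ _ _) _; apply: ler_sum => j _.
    rewrite normrM.
    have := le_trans (enorm_coord x j) nx; have := normr_ge0 (a 0 j).
    have := normr_ge0 (x 0 j); nra.
  have hw : `|(x - dot x a *: e) 0 i| <= 1 + Sa * `|e 0 i|.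
    rewrite !mxE; apply: le_trans (ler_normB _ _) _; rewrite normrM.
    have := normr_ge0 (e 0 i); have := normr_ge0 (dot x a); nra.
  move: hw; rewrite ler_norml => /andP [h1 h2]; nra.
have [kap [k0 hk]] := amen.2 B bB.
set rho := (kap * enorm e + 1) / r.
have rho0 : 0 < rho by rewrite divr_gt0 //; have := enorm_ge0 e; nra.
exists (e - rho *: g); split.
  by rewrite dotBl dotZl de ga mulr0 subr0.
have claim1 : forall x, K x -> enorm x <= 1 -> F (x - dot x a *: (e - rho *: g)).
  move=> x Kx nx; set t := dot x a.
  have t0 : 0 <= t := pos Kx.
  case: (eqVneq t 0) => [t00|tn0].
    rewrite t00 scale0r subr0; apply: KH_F => //; exact/hH.
  have tp : 0 < t by rewrite lt_def tn0 t0.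
  set w := x - t *: e.
  have wa : dot w a = 0 by rewrite dotBl dotZl de mulr1 subrr.
  have Bw : B w by exists x.
  have hK : Defs.edist w K <= t * enorm e.
    rewrite /Defs.edist.
    have lb : has_lbound [set enorm (w - y) | y in K].
      by exists 0 => _ [y _ <-]; exact: enorm_ge0.
    have -> : t * enorm e = enorm (w - x).
      by rewrite /w addrAC subrr add0r enormN enormZ ger0_norm.
    by apply: (ge_inf lb); exists x.
  have hF : Defs.edist w F < t * (kap * enorm e + 1).
    apply: le_lt_trans (hk w ((hH w).2 wa) Bw) _.
    have := enorm_ge0 e; nra.
  have ne : [set enorm (w - y) | y in F] !=set0.
    by case: fF.1 => f0 Ff0; exists (enorm (w - f0)), f0.
  have [_ [f Ff <-] hf] := inf_lt ne hF.
  set b := w - f.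
  have ba : dot b a = 0 by rewrite dotBl wa ((hH f).1 (F_span Ff)) subrr.
  have tr0 : 0 < t * rho by rewrite mulr_gt0.
  have hb' : F (g + (t * rho)^-1 *: b).
    apply: hg; first by rewrite dotZl ba mulr0.
    rewrite enormZ ger0_norm; last by rewrite invr_ge0 ltW.
    rewrite ler_pdivrMl //.
    have -> : t * rho * r = t * (kap * enorm e + 1).
      by rewrite /rho; field; rewrite gt_eqF.
    exact: ltW hf.
  have := F_add (F_scale (ltW tr0) hb') Ff.
  rewrite scalerDr scalerA mulfV ?gt_eqF // scale1r.
  have -> : t * rho *: g + b + f = x - t *: (e - rho *: g).
    by apply/rowP => j; rewrite /b /w !mxE; ring.
  by [].
move=> x Kx.
set s := enorm x + 1.
have s0 : 0 < s by rewrite /s; have := enorm_ge0 x; lra.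
have Ks : K (s^-1 *: x) by apply: K_scale => //; rewrite invr_ge0 ltW.
have ns : enorm (s^-1 *: x) <= 1.
  rewrite enormZ ger0_norm; last by rewrite invr_ge0 ltW.
  rewrite ler_pdivrMl // mulr1 /s; lra.
move: (claim1 _ Ks ns) => /(F_scale (ltW s0)).
rewrite dotZl.
have -> : s *: (s^-1 *: x - s^-1 * dot x a *: (e - rho *: g)) = x - dot x a *: (e - rho *: g).
  by apply/rowP => j; rewrite !mxE; field; rewrite gt_eqF.
by [].
Qed.

End Cone.

Lemma normal_exists m (A : 'M[R]_(m, m.+1)) : row_free A ->
  exists a : 'rV[R]_m.+1, a != 0 /\ forall x, (x <= A)%MS <-> dot x a = 0.
Proof.
move=> rfA; have rA : \rank A = m by apply/eqP.
set N := kermx A^T.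
have rN : \rank N = 1%N by rewrite mxrank_ker mxrank_tr rA subSnn.
have [i ai] : exists i, row i N != 0.
  case: (pickP (fun i => row i N != 0)) => [i hi|h]; first by exists i.
  have N0 : N = 0.
    by apply/row_matrixP => i; move/negbFE/eqP: (h i) => ->; rewrite row0.
  by move: rN; rewrite N0 mxrank0.
exists (row i N); split=> // x.
have aA : A *m (row i N)^T = 0.
  have : row i N *m A^T = 0 by apply/sub_kermxP; exact: row_sub.
  by move/(congr1 trmx); rewrite trmx_mul trmxK trmx0.
have dot0 : forall y, dot y (row i N) = 0 <-> y *m (row i N)^T = 0.
  move=> y; split=> [h|h]; last by rewrite /dot h mxE.
  by apply/matrixP => p q; rewrite !ord1 [RHS]mxE; exact: h.
split.
  by move=> /submxP [D ->]; apply/dot0; rewrite -mulmxA aA mulmx0.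
move=> /dot0 /sub_kermxP hk.
have AK : (A <= kermx (row i N)^T)%MS by apply/sub_kermxP.
have rk : \rank (kermx (row i N)^T) = m.
  by rewrite mxrank_ker mxrank_tr rank_rV ai subn1.
have KA : (kermx (row i N)^T <= A)%MS by rewrite -(mxrank_leqif_sup AK).2 rA rk.
exact: submx_trans hk KA.
Qed.

End Helpers.

Theorem theorem6p2 (R : realType) (n : nat) (K F : set 'rV[R]_n) :
  closed_convex_cone K -> pointed K -> full_dimensional K ->
  amenable_face K F -> has_dim F n.-1 ->
  proj_exposed K F.
Proof.
move=> [_ cK] _ _ amen [A [rfA hA]].
have fF := amen.1.
split => //.
case: n K F A rfA hA cK amen fF => [|m] K F A rfA hA cK amen fF.
  exists 1%:M; split; first by rewrite mulmx1.
  apply/seteqP; split=> [_ [x Kx <-]|x Fx].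
    by case: fF.1 => f0 Ff0; rewrite (thinmx0 (_ *m _)) -(thinmx0 f0).
  exists x; first by case: fF => _ [FK _]; exact: FK.
  by rewrite (thinmx0 (_ *m _)) (thinmx0 x).
have [a [a0 ha]] := normal_exists rfA.
have hH : forall x, lin_span F x <-> dot x a = 0 := fun x => iff_trans (hA x) (ha x).
have hrel0 : forall a : 'rV_m.+1, (forall x, (x <= A)%MS <-> dot x a = 0) ->
    exists g r, F g /\ 0 < r /\ forall b, dot b a = 0 -> enorm b <= r -> F (g + b).
  move=> a' ha'.
  have [g [r [Fg [r0 hg]]]] := relint cK fF hA.
  exists g, r; split=> //; split=> // b hb; apply: hg; exact/(ha' b).2.
wlog pos : a a0 ha hH / forall x, K x -> 0 <= dot x a.
  move=> hw; case: (pselect (forall x, K x -> 0 <= dot x a)) => [p|np].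
    exact: (hw a).
  have [x [Kx xn]] : exists x, K x /\ dot x a < 0.
    move/existsNP: np => [x /not_implyP [Kx /negP]]; rewrite -ltNge => h.
    by exists x.
  have eN : forall u : R, (- u = 0) <-> (u = 0).
    move=> u; split=> [h|->]; last by rewrite oppr0.
    by apply/eqP; rewrite -oppr_eq0 h.
  apply: (hw (- a)).
  - by rewrite oppr_eq0.
  - move=> y; rewrite dotNr; apply: iff_trans (ha y) (iff_sym (eN _)).
  - move=> y; rewrite dotNr; apply: iff_trans (hH y) (iff_sym (eN _)).
  move=> y Ky; rewrite dotNr oppr_ge0 leNgt; apply/negP => yp.
  exact: (sign_one cK fF hH Ky Kx).
have [d [da hd]] := core cK fF hH amen pos a0 (hrel0 a ha).
exists (1%:M - a^T *m d).
have xP : forall x, x *m (1%:M - a^T *m d) = x - dot x a *: d.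
  by move=> x; rewrite mulmxBr mulmx1 mulmxA [x *m a^T]mx11_scalar mul_scalar_mx.
split.
  apply/row_matrixP => i.
  have rP : row i (1%:M - a^T *m d) = row i 1%:M - dot (row i 1%:M) a *: d.
    by rewrite -xP -row_mul mul1mx.
  by rewrite row_mul rP xP dotBl dotZl da mulr1 subrr scale0r subr0.
apply/seteqP; split => [_ [x Kx <-]|x Fx].
  by rewrite xP; exact: hd.
exists x; first by case: fF => _ [FK _]; exact: FK.
by rewrite xP ((hH x).1 (F_span Fx)) scale0r subr0.
Qed.
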